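(* Let $\tau_1,\tau_2:[0,1]\to[0,1]$ be piecewise $C^1$ maps with $\tau_1\le\tau_2$ on $[0,1]$, and suppose that $\tau_1$ and $\tau_2$ possess absolutely continuous invariant probability measures with densities $f_1$ and $f_2$, respectively. Let $0<\lambda<1$ and $f=\lambda f_1+(1-\lambda)f_2$. Let $\boldsymbol\tau$ be a selector (a piecewise $C^1$ map $\boldsymbol\tau:[0,1]\to[0,1]$ with $\tau_1\le\boldsymbol\tau\le\tau_2$) that preserves the density $f$. Then there exists a measurable function $p:[0,1]\to[0,1]$ such that the position dependent random map $R=\{\tau_1,\tau_2;p,1-p\}$ also preserves $f$.
   Context: A position dependent random map $R=\{\tau_1,\tau_2;p,1-p\}$, where $p:[0,1]\to[0,1]$ is measurable, moves a point $x$ to $\tau_1(x)$ with probability $p(x)$ and to $\tau_2(x)$ with probability $1-p(x)$. A density $f$ is invariant (preserved) for $R$ if $P_{\tau_1}(pf)+P_{\tau_2}((1-p)f)=f$ a.e., where $P_{\tau_k}$ is the Frobenius–Perron operator of $\tau_k$ with respect to Lebesgue measure. *)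

(* Defs.v *)
From HB Require Import structures.
From mathcomp Require Import all_boot all_order all_algebra.
From mathcomp Require Import all_classical all_reals all_analysis.
Set Implicit Arguments. Unset Strict Implicit. Unset Printing Implicit Defensive.
Import Order.TTheory GRing.Theory Num.Theory.
Import numFieldNormedType.Exports.
Local Open Scope classical_set_scope.
Local Open Scope ring_scope.

Section Defs.
Variable R : realType.
Local Notation mu := (@lebesgue_measure R).

Definition I01 : set R := `[0, 1]%classic.

Definition maps_unit (tau : R -> R) : Prop := forall x, I01 x -> I01 (tau x).

(* Piecewise C^1 (Gora-Boyarsky): there is a partition 0 = a_0 < ... < a_n = 1
   such that on each open piece (a_i, a_{i+1}) tau coincides with a C^1 function
   (i.e. the restriction extends to a C^1 function on the closed piece). *)
Definition piecewise_C1 (tau : R -> R) : Prop :=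
  exists (n : nat) (a : nat -> R),
    a 0%N = 0 /\ a n = 1 /\ (forall i, (i < n)%N -> a i < a i.+1) /\
    forall i, (i < n)%N -> exists g : R -> R,
      (forall x, derivable g x 1) /\ continuous (derive1 g) /\
      (forall x, a i < x < a i.+1 -> tau x = g x).

Definition density (f : R -> R) : Prop :=
  measurable_fun I01 f /\ (forall x, I01 x -> 0 <= f x) /\
  (\int[mu]_(x in I01) (f x)%:E = 1)%E.

(* g = P_tau h : the Frobenius-Perron operator of tau (w.r.t. Lebesgue measure
   on [0,1]) applied to h equals g, i.e. g is the (a.e. unique) integrable
   function with  int_A g = int_{tau^-1 A} h  for every measurable A in [0,1]. *)
Definition FP_image (tau : R -> R) (h g : R -> R) : Prop :=
  mu.-integrable I01 (EFin \o g) /\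
  forall A : set R, measurable A -> A `<=` I01 ->
    (\int[mu]_(x in A) (g x)%:E = \int[mu]_(x in I01 `&` tau @^-1` A) (h x)%:E)%E.

Definition preserves (tau : R -> R) (f : R -> R) : Prop := FP_image tau f f.

Definition acim_density (tau : R -> R) (f : R -> R) : Prop :=
  density f /\ preserves tau f.

(* The position dependent random map {tau1, tau2; p, 1-p} preserves f :
   P_tau1 (p f) + P_tau2 ((1-p) f) = f  a.e. on [0,1]. *)
Definition random_preserves (tau1 tau2 p f : R -> R) : Prop :=
  exists g1 g2 : R -> R,
    FP_image tau1 (fun x => p x * f x) g1 /\
    FP_image tau2 (fun x => (1 - p x) * f x) g2 /\
    {ae mu, forall x, I01 x -> g1 x + g2 x = f x}.
End Defs.

(* Main.v *)
Require Import Defs.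
From HB Require Import structures.
From mathcomp Require Import all_boot all_order all_algebra.
From mathcomp Require Import all_classical all_reals all_analysis.
Import Order.TTheory GRing.Theory Num.Theory.
Local Open Scope classical_set_scope.
Local Open Scope ring_scope.
Import numFieldNormedType.Exports.
Lemma measurable_inv (R : realType) : measurable_fun (@setT R) (@GRing.inv R).
Proof.
have -> : @setT R = [set 0] `|` ~` [set 0] by rewrite setUv.
apply/measurable_funU => //; first exact: measurableC.
split.
  move=> _ B mB.
  have [B0|B0] := pselect (B (0:R)^-1).
    rewrite (_ : _ `&` _ = [set 0]) //; apply/seteqP; split => [x [->]//|x ->]//.
  rewrite (_ : _ `&` _ = set0) //; apply/seteqP; split => [x [-> ]//|x]//.
apply: measurable_realfun.open_continuous_measurable_fun.
  rewrite openC; exact/accessible_closed_set1/hausdorff_accessible/norm_hausdorff.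
move=> x; rewrite inE /= => /eqP x0; exact: inv_continuous.
Qed.
Section S.
Local Open Scope ereal_scope.
Import HBNNSimple.
Context d (T : measurableType d) (R : realType) (mu : {measure set T -> \bar R}).

Lemma supZ_le (k : R) (g G : T -> \bar R) : (0 < k)%R -> (forall x, G x = k%:E * g x) ->
  ereal_sup [set sintegral mu h | h in [set h : {nnsfun T >-> R} | forall x, (h x)%:E <= G x]]
  <= k%:E * ereal_sup [set sintegral mu h | h in [set h : {nnsfun T >-> R} | forall x, (h x)%:E <= g x]].
Proof.
move=> k0 GE; apply: ge_ereal_sup => _ [h hle <-].
have ki0 : (0 <= k^-1)%R by rewrite invr_ge0 ltW.
pose h' := scale_nnsfun h ki0.
have -> : sintegral mu h = k%:E * sintegral mu h'.
  rewrite -sintegralrM; apply: eq_sintegral => x /=.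
  by rewrite mulrA mulfV ?mul1r// gt_eqF.
apply: lee_wpmul2l; first by rewrite lee_fin ltW.
apply: ereal_sup_ubound; exists h' => // x /=.
rewrite EFinM -(@lee_pmul2l _ k%:E) ?lte_fin//.
by rewrite muleA -EFinM mulfV ?gt_eqF// mul1r -GE hle.
Qed.

Lemma ge0_integralZl_any (D : set T) (f : T -> \bar R) (k : R) : (0 < k)%R ->
  (forall x, D x -> 0 <= f x) ->
  \int[mu]_(x in D) (k%:E * f x) = k%:E * \int[mu]_(x in D) f x.
Proof.
move=> k0 f0.
rewrite !ge0_integralE//; last first.
  by move=> x Dx; apply: mule_ge0; [rewrite lee_fin ltW|exact: f0].
rewrite erestrict_scale.
set g := f \_ D.
apply/eqP; rewrite eq_le (supZ_le k g _ k0 (fun x => erefl))/=.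
have ki0 : (0 < k^-1)%R by rewrite invr_gt0.
have := supZ_le (k^-1) (fun x => k%:E * g x) g ki0.
move=> /(_ (fun x => _)) H.
rewrite -(@lee_pmul2l _ k^-1%:E) ?lte_fin//.
rewrite muleA -EFinM mulVf ?gt_eqF// mul1e; apply: H => x.
by rewrite muleA -EFinM mulVf ?gt_eqF// mul1e.
Qed.
End S.

Lemma key_pf (R : realType) (l a b : R) : 0 < l < 1 -> 0 <= a -> 0 <= b ->
  (l * a / (l * a + (1 - l) * b)) * (l * a + (1 - l) * b) = l * a /\
  (1 - l * a / (l * a + (1 - l) * b)) * (l * a + (1 - l) * b) = (1 - l) * b /\
  0 <= l * a / (l * a + (1 - l) * b) <= 1.
Proof.
move=> /andP[l0 l1] a0 b0.
have la : 0 <= l * a by apply: mulr_ge0 => //; apply: ltW.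
have lb : 0 <= (1 - l) * b by apply: mulr_ge0 => //; rewrite subr_ge0 ltW.
have [F0|F0] := eqVneq (l * a + (1 - l) * b) 0.
  move: F0 => /eqP; rewrite paddr_eq0 // => /andP[/eqP -> /eqP ->].
  by rewrite !mul0r ?mulr0 ?addr0 ?mul0r ?invr0 ?mulr0 lexx ler01.
have E1 : l * a / (l * a + (1 - l) * b) * (l * a + (1 - l) * b) = l * a.
  by rewrite mulfVK.
split => //; split.
  by rewrite mulrBl mul1r E1 addrAC subrr add0r.
rewrite divr_ge0 ?addr_ge0 //=.
have Fp : 0 < l * a + (1 - l) * b by rewrite lt_def F0 addr_ge0.
by rewrite ler_pdivrMr // mul1r lerDl.
Qed.

Theorem corollary1 (R : realType) (tau1 tau2 tau f1 f2 : R -> R) (lambda : R) :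
  maps_unit tau1 -> maps_unit tau2 ->
  piecewise_C1 tau1 -> piecewise_C1 tau2 ->
  (forall x, I01 x -> tau1 x <= tau2 x) ->
  acim_density tau1 f1 -> acim_density tau2 f2 ->
  0 < lambda < 1 ->
  maps_unit tau -> piecewise_C1 tau ->
  (forall x, I01 x -> tau1 x <= tau x <= tau2 x) ->
  preserves tau (fun x => lambda * f1 x + (1 - lambda) * f2 x) ->
  exists p : R -> R,
    measurable_fun (@I01 R) p /\ (forall x, I01 x -> I01 (p x)) /\
    random_preserves tau1 tau2 p (fun x => lambda * f1 x + (1 - lambda) * f2 x).
Proof.
move=> _ _ _ _ _ [[mf1 [f10 _]] [if1 Hf1]] [[mf2 [f20 _]] [if2 Hf2]] hl _ _ _ _.
have /andP[l0 l1] := hl.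
have l1' : 0 < 1 - lambda by rewrite subr_gt0.
pose F x := lambda * f1 x + (1 - lambda) * f2 x.
exists (fun x => lambda * f1 x / F x).
split.
  apply: measurable_realfun.measurable_funM.
    by apply: measurable_realfun.measurable_funM => //; exact: measurable_cst.
  apply: measurableT_comp; first exact: measurable_inv.
  apply: measurable_realfun.measurable_funD; apply: measurable_realfun.measurable_funM => //; exact: measurable_cst.
split.
  move=> x Ix; have [_ [_ H]] := @key_pf R lambda _ _ hl (f10 x Ix) (f20 x Ix).
  by rewrite /I01 /= in_itv /=.
exists (fun x => lambda * f1 x), (fun x => (1 - lambda) * f2 x).
split; [|split].
- split.
    have -> : EFin \o (fun x => lambda * f1 x) = (fun x => (lambda%:E * (EFin \o f1) x)%E).
      by apply/funext => x /=; rewrite EFinM.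
    apply: integrableZl; last exact: if1.
    exact: measurable_itv.
  move=> A mA AI.
  under eq_integral do rewrite EFinM.
  rewrite ge0_integralZl_any //; last by move=> x /AI Ix; rewrite lee_fin f10.
  rewrite Hf1 // -ge0_integralZl_any //; last by move=> x [Ix _]; rewrite lee_fin f10.
  apply: eq_integral => x; rewrite inE => -[Ix _].
  have [H _] := @key_pf R lambda _ _ hl (f10 x Ix) (f20 x Ix).
  by rewrite -EFinM /F H.
- split.
    have -> : EFin \o (fun x => (1 - lambda) * f2 x) = (fun x => ((1 - lambda)%:E * (EFin \o f2) x)%E).
      by apply/funext => x /=; rewrite EFinM.
    apply: integrableZl; last exact: if2.
    exact: measurable_itv.
  move=> A mA AI.
  under eq_integral do rewrite EFinM.
  rewrite ge0_integralZl_any //; last by move=> x /AI Ix; rewrite lee_fin f20.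
  rewrite Hf2 // -ge0_integralZl_any //; last by move=> x [Ix _]; rewrite lee_fin f20.
  apply: eq_integral => x; rewrite inE => -[Ix _].
  have [_ [H _]] := @key_pf R lambda _ _ hl (f10 x Ix) (f20 x Ix).
  by rewrite -EFinM /F H.
- by apply: aeW => x Ix.
Qed.
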